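(* Let $G$ be a finitely generated group that admits a surjective homomorphism onto $\mathbb{Z}^2$. Then for every finite symmetric generating set $X$ of $G$, the geodesic growth of $G$ with respect to $X$ is exponential: there exists $b>1$ with $\Gamma_{G,X}(n)\ge b^n$ for all $n\in\mathbb{N}$.
   Context: Generating sets may contain repeated elements (formally, a finite symmetric alphabet with an epimorphism from the free monoid onto $G$). A word over $X$ is a geodesic if its length equals the word length of the element it represents; $\Gamma_{G,X}(n)$ is the number of geodesic words over $X$ of length at most $n$. *)

(* Defs.v *)
From mathcomp Require Import all_boot.
From mathcomp Require Import ssralg ssrint.
From Stdlib Require Import ClassicalEpsilon Reals.
Set Implicit Arguments. Unset Strict Implicit. Unset Printing Implicit Defensive.

Definition group_axioms (G : Type) (mul : G -> G -> G) (inv : G -> G) (e : G) : Prop :=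
  (forall a b c, mul a (mul b c) = mul (mul a b) c) /\
  (forall a, mul e a = a) /\ (forall a, mul a e = a) /\
  (forall a, mul (inv a) a = e) /\ (forall a, mul a (inv a) = e).

Definition pbool (P : Prop) : bool := if excluded_middle_informative P then true else false.

Section Words.
Variables (G : Type) (mul : G -> G -> G) (inv : G -> G) (e : G).
Variables (X : finType) (f : X -> G).

Definition eval_word (w : seq X) : G := foldr (fun x g => mul (f x) g) e w.

Definition generating : Prop := forall g : G, exists w : seq X, eval_word w = g.

Definition symmetric_alph : Prop := forall x : X, exists y : X, f y = inv (f x).

Definition geodesic (w : seq X) : Prop :=
  forall w' : seq X, eval_word w' = eval_word w -> size w <= size w'.

Definition geod_growth (n : nat) : nat :=
  \sum_(k < n.+1) #|[set t : k.-tuple X | pbool (geodesic t)]|.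
End Words.

Definition fin_generated (G : Type) (mul : G -> G -> G) (e : G) : Prop :=
  exists (X : finType) (f : X -> G), generating mul e f.

Definition epi_Z2 (G : Type) (mul : G -> G -> G) (phi : G -> int * int) : Prop :=
  (forall a b, phi (mul a b) = (GRing.add (phi a).1 (phi b).1, GRing.add (phi a).2 (phi b).2)) /\
  (forall z : int * int, exists g, phi g = z).

(* Main.v *)
Require Import Defs.
From mathcomp Require Import all_boot.
From mathcomp Require Import ssralg ssrint.
From Stdlib Require Import Reals.
From mathcomp Require Import all_order all_algebra.
From mathcomp Require Import zify ring.
From Stdlib Require Import Classical ClassicalEpsilon.
Import GRing.Theory Num.Theory.

Lemma max_exists (T : eqType) (R : T -> T -> Prop) (s : seq T) (a : T) :
  (forall x, ~ R x x) -> (forall x y z, R x y -> R y z -> R x z) ->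
  exists c, (c = a \/ c \in s) /\ forall e, (e = a \/ e \in s) -> ~ R c e.
Proof.
move=> irr tr; elim: s => [|d s [c [Hc Hm]]].
  exists a; split; first by left. by move=> e [->|//]; apply: irr.
case: (classic (R c d)) => Rcd.
- exists d; split; first by right; rewrite inE eqxx.
  move=> e He Rde. have He' : e = d \/ (e = a \/ e \in s).
    case: He => [->|]; [by right; left|]. rewrite inE => /orP[/eqP->|]; [by left|by right; right].
  case: He' => [Ed|He']; first by rewrite Ed in Rde; apply: (irr d).
  by apply: (Hm e He'); apply: tr Rcd Rde.
- exists c; split.
    case: Hc => [->|Hc]; [by left|by right; rewrite inE Hc orbT].
  move=> e [->|]; first by apply: Hm; left.
  rewrite inE => /orP[/eqP->//|He]; by apply: Hm; right.
Qed.

Local Open Scope ring_scope.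

Definition inH (u : int * int) : Prop := u.1 < 0 \/ (u.1 = 0 /\ u.2 < 0).
Definition cross (c d : int * int) : int := c.1 * d.2 - c.2 * d.1.

Lemma cross_trans c d e : inH c -> inH d -> inH e ->
  0 < cross c d -> 0 < cross d e -> 0 < cross c e.
Proof.
case: c => c1 c2; case: d => d1 d2; case: e => e1 e2; rewrite /inH /cross /=.
move=> Hc Hd He Hcd Hde.
have c1n : c1 < 0.
  case: Hc => [//|[c10 c2n]]. exfalso. rewrite c10 in Hcd.
  case: Hd => [Hd|[Hd0 _]]; nia.
have e1n : e1 <= 0 by case: He => [|[]]; lia.
have d1n : d1 <= 0 by case: Hd => [|[]]; lia.
have id : (d1*e2 - d2*e1) * c1 = - (c1*d2 - c2*d1) * e1 + (c1*e2 - c2*e1) * d1 by ring.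
case: (lerP (c1 * e2 - c2 * e1) 0) => // Hce.
exfalso.
have h1 : 0 <= - (c1*d2 - c2*d1) * e1 by nia.
have h2 : 0 <= (c1*e2 - c2*e1) * d1 by nia.
have h3 : (d1*e2 - d2*e1) * c1 < 0 by nia.
lia.
Qed.

Definition psi (d u : int * int) : int := d.1 * u.2 - d.2 * u.1.

Section Main.
Variables (G : Type) (mul : G -> G -> G) (e : G) (X : finType) (f : X -> G)
  (phi : G -> int * int).
Hypothesis hom : forall a b, phi (mul a b) =
  (GRing.add (phi a).1 (phi b).1, GRing.add (phi a).2 (phi b).2).
Hypothesis he : mul e e = e.

Lemma phi_e : phi e = (0, 0).
Proof.
have := hom e e; rewrite he. case: (phi e) => a b [] ha hb. congr pair; lia.
Qed.

Lemma psi_cons d x w : psi d (phi (eval_word mul e f (x :: w))) =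
  psi d (phi (f x)) + psi d (phi (eval_word mul e f w)).
Proof. rewrite /= hom /psi /=. ring. Qed.

Lemma psi_le d M w : (forall x, psi d (phi (f x)) <= M) ->
  psi d (phi (eval_word mul e f w)) <= (size w)%:Z * M.
Proof.
move=> H; elim: w => [|x w IH]; first by rewrite /= phi_e /psi /=; lia.
rewrite psi_cons /=. have := H x. nia.
Qed.

Lemma psi_eq d M w (x1 x2 : X) : psi d (phi (f x1)) = M -> psi d (phi (f x2)) = M ->
  all (fun x => (x == x1) || (x == x2)) w ->
  psi d (phi (eval_word mul e f w)) = (size w)%:Z * M.
Proof.
move=> h1 h2; elim: w => [|x w IH]; first by rewrite /= phi_e /psi /=; lia.
rewrite psi_cons /= => /andP[/orP[/eqP->|/eqP->] /IH ->]; rewrite ?h1 ?h2; rewrite -addn1 PoszD mulrDl mul1r addrC; reflexivity.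
Qed.

End Main.

Definition psub (u v : int * int) : int * int := (u.1 - v.1, u.2 - v.2).

Lemma main_nat (G : Type) (mul : G -> G -> G) (inv : G -> G) (e : G) :
  group_axioms mul inv e ->
  (exists phi : G -> int * int, epi_Z2 mul phi) ->
  forall (X : finType) (f : X -> G),
    generating mul e f -> forall n : nat, leq (expn 2 n) (geod_growth mul e f n).
Proof.
move=> [_ [he1 _]] [phi [hom surj]] X f gen.
have he : mul e e = e := he1 e.
have phie := @phi_e _ _ _ _ hom he.
have [g0 hg0] := surj (1,0). have [w0 hw0] := gen g0.
case: w0 hw0 => [|x0 w0] hw0.
  by exfalso; move: hg0; rewrite -hw0 /= phie => -[].
pose P := fun x => phi (f x).
have [x1 [_ Hx1]] := @max_exists X
  (fun x y => (P x).1 < (P y).1 \/ ((P x).1 = (P y).1 /\ (P x).2 < (P y).2))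
  (enum X) x0 (fun x => ltac:(lia)) (fun x y z => ltac:(lia)).
have lexm : forall y, (P y).1 < (P x1).1 \/ ((P y).1 = (P x1).1 /\ (P y).2 <= (P x1).2).
  by move=> y; have := Hx1 y (or_intror (mem_enum X y)); lia.
case: (classic (exists x2, P x2 <> P x1)) => [[x2' Hx2']|Hall]; last first.
  have Hall' : forall y, P y = P x1.
    by move=> y; apply: NNPP => H; apply: Hall; exists y.
  case: (lerP 0 (P x1).1) => Ha.
  - have [g hg] := surj (-1,0); have [w hw] := gen g.
    have := @psi_le _ _ _ _ f _ hom he (0,1) (- (P x1).1) w.
    rewrite hw hg /psi /=.
    have H : forall x : X, 0 * (phi (f x)).2 - 1 * (phi (f x)).1 <= - (P x1).1.
      by move=> x; have := Hall' x; rewrite /P => ->; lia.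
    move=> /(_ H). nia.
  - have [g hg] := surj (1,0); have [w hw] := gen g.
    have := @psi_le _ _ _ _ f _ hom he (0,-1) ((P x1).1) w.
    rewrite hw hg /psi /=.
    have H : forall x : X, 0 * (phi (f x)).2 - (-1) * (phi (f x)).1 <= (P x1).1.
      by move=> x; have := Hall' x; rewrite /P => ->; lia.
    move=> /(_ H). nia.
set v1 := P x1.
have HinH : forall y, P y <> v1 -> inH (psub (P y) v1).
  move=> y; rewrite /inH /psub /v1 /=; have := lexm y; rewrite /P => hl ne.
  case: hl => [h|[h1 h2]]; first by left; lia.
  right; split; first lia.
  have : (phi (f y)).2 <> (phi (f x1)).2 by move=> eq; apply: ne; apply: injective_projections.
  lia.
pose R2 := fun y z => P y <> v1 /\ P z <> v1 /\ 0 < cross (psub (P y) v1) (psub (P z) v1).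
have irr2 : forall x, ~ R2 x x.
  by move=> x [_ [_ h]]; move: h; rewrite /cross; nia.
have tr2 : forall x y z, R2 x y -> R2 y z -> R2 x z.
  move=> x y z [hx [hy h1]] [_ [hz h2]]; split; [done|split; first done].
  by apply: (@cross_trans _ _ _ _ _ _ h1 h2); apply: HinH.
have [x2 [Hx2m Hx2]] := @max_exists X R2 [seq y <- enum X | P y != v1] x2' irr2 tr2.
have Px2 : P x2 <> v1.
  case: Hx2m => [->//|]; rewrite mem_filter => /andP[/eqP //].
pose d := psub (P x2) v1.
pose M := psi d v1.
have Hle : forall y, psi d (phi (f y)) <= M.
  move=> y; case: (eqVneq (P y) v1) => [E|ne].
    by rewrite /M -E.
  have hy : y \in [seq y <- enum X | P y != v1] by rewrite mem_filter ne mem_enum.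
  have nR := Hx2 y (or_intror hy).
  have hc : cross d (psub (P y) v1) <= 0.
    case: (lerP (cross d (psub (P y) v1)) 0) => // hc.
    by exfalso; apply: nR; split; [done|split; [apply/eqP|]].
  have id : psi d (P y) - psi d v1 = cross d (psub (P y) v1).
    by rewrite /psi /cross /psub /=; ring.
  rewrite /M; move: id hc; rewrite /P; lia.
have Heq2 : psi d (phi (f x2)) = M.
  by rewrite /M /d /psi /psub /=; ring.
have Hd : d.1 <> 0 \/ d.2 <> 0.
  apply: NNPP => H; apply: Px2; apply: injective_projections; rewrite /d /psub /= in H; lia.
have Mpos : 0 < M.
  have [g hg] := surj (-(d.2), d.1); have [w hw] := gen g.
  have := @psi_le _ _ _ _ f _ hom he d M w Hle.
  rewrite hw hg /psi.
  clearbody M d.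
  have pos : 0 < d.1 * d.1 + d.2 * d.2 by case: Hd => H; nia.
  rewrite /=. nia.
have x12 : x1 != x2.
  by apply/eqP => E; apply: Px2; rewrite /v1 E.
have Hgeo : forall u : seq X, all (fun x => (x == x1) || (x == x2)) u -> geodesic mul e f u.
  move=> u hu w' hw'.
  have h1 := @psi_eq _ _ _ _ f _ hom he d M u x1 x2 erefl Heq2 hu.
  have h2 := @psi_le _ _ _ _ f _ hom he d M w' Hle.
  rewrite hw' h1 in h2. by rewrite ler_pM2r // lez_nat in h2.
have Hn : forall n : nat, leq (expn 2 n) (geod_growth mul e f n).
  move=> n; rewrite /geod_growth big_ord_recr /=.
  apply: leq_trans (leq_addl _ _).
  pose h := fun b : bool => if b then x1 else x2.
  have hinj : injective h.
    by case; case => //= H; move: x12; rewrite H eqxx.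
  have ginj : injective (fun t : n.-tuple bool => map_tuple h t).
    by move=> t t' /(congr1 val) /= /(inj_map hinj) /val_inj.
  apply: leq_trans (subset_leq_card (_ : [set map_tuple h t | t : n.-tuple bool] \subset _)).
    by rewrite card_imset // card_tuple card_bool.
  apply/subsetP => _ /imsetP [t _ ->]; rewrite inE /pbool.
  case: excluded_middle_informative => // H; exfalso; apply: H; apply: Hgeo.
  rewrite /= all_map; apply/allP => b _ /=; case: b; by rewrite eqxx ?orbT.
exact: Hn.
Qed.

Local Close Scope ring_scope.
Lemma INR_pow2 (n : nat) : INR (expn 2 n) = pow (INR 2) n.
Proof.
elim: n => [|n IH]; first by [].
by rewrite expnS mult_INR IH.
Qed.


Theorem corollary3p2 (G : Type) (mul : G -> G -> G) (inv : G -> G) (e : G) :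
  group_axioms mul inv e ->
  fin_generated mul e ->
  (exists phi : G -> int * int, epi_Z2 mul phi) ->
  forall (X : finType) (f : X -> G),
    generating mul e f -> symmetric_alph inv f ->
    exists b : R, Rlt 1 b /\
      forall n : nat, Rle (pow b n) (INR (geod_growth mul e f n)).
Proof.
move=> Hg _ Hphi X f gen _.
exists (INR 2); split; first by apply: (lt_INR 1 2); apply/ltP.
move=> n; rewrite -INR_pow2; apply: le_INR; apply/leP; exact: main_nat Hg Hphi X f gen n.
Qed.
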